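(* Let $\mathbf G$ and $\mathbf H$ be power-associative loops. Then $\mathcal G(\mathbf G)\cong\mathcal G(\mathbf H)$ if and only if $\mathcal G^{\pm}(\mathbf G)\cong\mathcal G^{\pm}(\mathbf H)$.
   Context: A loop is power-associative if every subloop generated by one element is a group; powers $x^n$ are computed in $\langle x\rangle$. The power graph $\mathcal G(\mathbf G)$ has vertex set $G$, distinct $x,y$ adjacent iff $y=x^n$ or $x=y^n$ for some $n\in\mathbb Z$. The $Z^\pm$-power graph $\mathcal G^{\pm}(\mathbf G)$ has vertex set $G$, distinct $x,y$ adjacent iff $y=x^n$ or $x=y^n$ for some $n\in\mathbb Z\setminus\{0\}$. Isomorphism means isomorphism of simple graphs. *)

(* Defs.v *)
(* loops may be infinite, so we use an arbitrary carrier Type. *)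
From Stdlib Require Import ZArith.

(* A loop, in the standard equational (quasigroup-with-identity) form:
   left/right divisions make  a * x = b  and  y * a = b  uniquely solvable. *)
Record loop := Loop {
  carrier :> Type;
  lmul : carrier -> carrier -> carrier;
  lone : carrier;
  lldiv : carrier -> carrier -> carrier;
  lrdiv : carrier -> carrier -> carrier;
  lmul1x : forall x, lmul lone x = x;
  lmulx1 : forall x, lmul x lone = x;
  lmul_ldiv : forall a b, lmul a (lldiv a b) = b;
  lldiv_mul : forall a b, lldiv a (lmul a b) = b;
  lrdiv_mul : forall a b, lmul (lrdiv b a) a = b;
  lmul_rdiv : forall a b, lrdiv (lmul b a) a = b
}.

Inductive gen1 (L : loop) (x : L) : L -> Prop :=
| gen1_x : gen1 L x x
| gen1_mul a b : gen1 L x a -> gen1 L x b -> gen1 L x (lmul L a b)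
| gen1_ldiv a b : gen1 L x a -> gen1 L x b -> gen1 L x (lldiv L a b)
| gen1_rdiv a b : gen1 L x a -> gen1 L x b -> gen1 L x (lrdiv L b a).

(* Power-associative: every one-generated subloop is a group, i.e. the
   multiplication is associative on it (it is already a loop). *)
Definition power_associative (L : loop) : Prop :=
  forall x a b c, gen1 L x a -> gen1 L x b -> gen1 L x c ->
    lmul L (lmul L a b) c = lmul L a (lmul L b c).

Fixpoint npow (L : loop) (x : L) (n : nat) : L :=
  match n with
  | O => lone L
  | S m => lmul L (npow L x m) x
  end.

Definition zpow (L : loop) (x : L) (z : Z) : L :=
  match z with
  | Z0 => lone L
  | Zpos p => npow L x (Pos.to_nat p)
  | Zneg p => lrdiv L (lone L) (npow L x (Pos.to_nat p))
  end.

Definition power_adj (L : loop) (x y : L) : Prop :=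
  x <> y /\ exists n : Z, y = zpow L x n \/ x = zpow L y n.

Definition pm_power_adj (L : loop) (x y : L) : Prop :=
  x <> y /\ exists n : Z, n <> 0%Z /\ (y = zpow L x n \/ x = zpow L y n).

Definition graph_iso {A B : Type} (EA : A -> A -> Prop) (EB : B -> B -> Prop) : Prop :=
  exists (f : A -> B) (g : B -> A),
    (forall a, g (f a) = a) /\ (forall b, f (g b) = b) /\
    (forall a1 a2, EA a1 a2 <-> EB (f a1) (f a2)).

(* Main.v *)
Require Import Defs.
From Stdlib Require Import ZArith Lia Classical ClassicalEpsilon.
Open Scope Z_scope.

Section LoopFacts.
Variable L : loop.
Hypothesis PA : power_associative L.
Local Notation m := (lmul L).
Local Notation one := (lone L).

Lemma rcancel a b c : m a c = m b c -> a = b.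
Proof. intro H. rewrite <- (lmul_rdiv L c a), <- (lmul_rdiv L c b), H. reflexivity. Qed.

Lemma lcancel a b c : m c a = m c b -> a = b.
Proof. intro H. rewrite <- (lldiv_mul L c a), <- (lldiv_mul L c b), H. reflexivity. Qed.

Lemma rdiv_unique u a b : m u a = b -> u = lrdiv L b a.
Proof. intro H. rewrite <- H, lmul_rdiv. reflexivity. Qed.

Lemma gen1_one x : gen1 L x one.
Proof.
  assert (H : lldiv L x (m x one) = one) by apply lldiv_mul.
  rewrite lmulx1 in H. rewrite <- H. apply gen1_ldiv; constructor.
Qed.

Lemma gen1_npow x n : gen1 L x (npow L x n).
Proof. induction n; simpl. apply gen1_one. apply gen1_mul; auto. constructor. Qed.

Lemma gen1_zpow x z : gen1 L x (zpow L x z).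
Proof. destruct z; simpl. apply gen1_one. apply gen1_npow.
  apply gen1_rdiv. apply gen1_npow. apply gen1_one. Qed.

Lemma gen1_inv x a : gen1 L x a -> gen1 L x (lrdiv L one a).
Proof. intro. apply gen1_rdiv; auto. apply gen1_one. Qed.

Ltac gtac := repeat first [apply gen1_zpow | apply gen1_npow | apply gen1_one | apply gen1_inv | apply gen1_x | apply gen1_mul].

Lemma rinv x a : gen1 L x a -> m a (lrdiv L one a) = one.
Proof.
  intro Ha. apply (rcancel _ _ a).
  rewrite (PA x); auto using gen1_inv, gen1_one.
  rewrite lrdiv_mul, lmulx1, lmul1x. reflexivity.
Qed.

Lemma npow_comm x n : m (npow L x n) x = m x (npow L x n).
Proof.
  induction n; simpl. rewrite lmul1x, lmulx1; auto.
  rewrite <- (PA x); auto using gen1_npow; try constructor.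
  rewrite <- IHn. reflexivity.
Qed.

Lemma zpow_succ x z : zpow L x (Z.succ z) = m (zpow L x z) x.
Proof.
  destruct z as [|p|p].
  - reflexivity.
  - replace (Z.succ (Zpos p)) with (Zpos (Pos.succ p)) by lia.
    unfold zpow. rewrite Pos2Nat.inj_succ. reflexivity.
  - destruct (Pos.succ_pred_or p) as [->|Hp].
    + simpl. rewrite lmul1x, lrdiv_mul. reflexivity.
    + rewrite <- Hp. replace (Z.succ (Zneg (Pos.succ (Pos.pred p)))) with (Zneg (Pos.pred p)) by lia.
      unfold zpow. rewrite Pos2Nat.inj_succ. simpl.
      set (a := npow L x (Pos.to_nat (Pos.pred p))).
      symmetry. apply rdiv_unique.
      unfold a; rewrite (npow_comm x); fold a.
      assert (Ga : gen1 L x a) by apply gen1_npow.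
      assert (Gx : gen1 L x x) by constructor.
      rewrite (PA x); auto using gen1_inv, gen1_mul.
      apply lrdiv_mul.
Qed.

Lemma zpow_pred x z : zpow L x (Z.pred z) = m (zpow L x z) (lrdiv L one x).
Proof.
  rewrite <- (Z.succ_pred z) at 2. rewrite zpow_succ.
  rewrite (PA x); try gtac.
  rewrite (rinv x); [|constructor]. rewrite lmulx1. reflexivity.
Qed.

Lemma zpow_add x a b : zpow L x (a + b) = m (zpow L x a) (zpow L x b).
Proof.
  induction b using Z.peano_ind.
  - rewrite Z.add_0_r. simpl. rewrite lmulx1. reflexivity.
  - rewrite Z.add_succ_r, !zpow_succ, IHb.
    rewrite (PA x); try gtac. reflexivity.
  - rewrite Z.add_pred_r, !zpow_pred, IHb.
    rewrite (PA x); try gtac. reflexivity.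
Qed.

Lemma zpow_1 x : zpow L x 1 = x.
Proof. simpl. apply lmul1x. Qed.

Lemma zpow_m1 x : zpow L x (-1) = lrdiv L one x.
Proof. simpl. rewrite lmul1x. reflexivity. Qed.

Lemma zpow_mul x a b : zpow L (zpow L x a) b = zpow L x (a * b).
Proof.
  induction b using Z.peano_ind.
  - rewrite Z.mul_0_r. reflexivity.
  - rewrite Z.mul_succ_r, zpow_succ, IHb, zpow_add. reflexivity.
  - rewrite Z.mul_pred_r, zpow_pred, IHb.
    replace (lrdiv L one (zpow L x a)) with (zpow L x (- a)).
    + rewrite <- zpow_add. f_equal. 
    + apply rdiv_unique. rewrite <- zpow_add. rewrite Z.add_opp_diag_l. reflexivity.
Qed.

Lemma zpow_one_base n : zpow L one n = one.
Proof.
  pose proof (zpow_mul one 0 n) as H. simpl in H. rewrite H. reflexivity.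
Qed.

Lemma zpow_sub_one x a b : zpow L x a = zpow L x b -> zpow L x (a - b) = one.
Proof.
  intro H. apply (rcancel _ _ (zpow L x b)). rewrite <- zpow_add, lmul1x.
  replace (a - b + b) with a by lia. exact H.
Qed.

Lemma zpow_mod x n k : zpow L x n = one -> 0 < n -> zpow L x k = zpow L x (k mod n).
Proof.
  intros H Hn. rewrite (Z.div_mod k n) at 1 by lia.
  rewrite zpow_add, <- zpow_mul, H, zpow_one_base, lmul1x. reflexivity.
Qed.

Lemma zpow_inv_inv x : zpow L (zpow L x (-1)) (-1) = x.
Proof. rewrite zpow_mul. apply zpow_1. Qed.

End LoopFacts.

Definition cmp (L : loop) (x y : L) : Prop :=
  exists n, n <> 0 /\ (y = zpow L x n \/ x = zpow L y n).
Definition tor (L : loop) (x : L) : Prop := exists n, n <> 0 /\ zpow L x n = lone L.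
Definition twin {A : Type} (E : A -> A -> Prop) (a b : A) : Prop :=
  a <> b /\ E a b /\ forall w, w <> a -> w <> b -> (E w a <-> E w b).
Definition isoF {A B : Type} (EA : A -> A -> Prop) (EB : B -> B -> Prop) (f : A -> B) (g : B -> A) :=
  (forall a, g (f a) = a) /\ (forall b, f (g b) = b) /\
  (forall a1 a2, EA a1 a2 <-> EB (f a1) (f a2)).

Section Graphs.
Context {A B : Type} (EA : A -> A -> Prop) (EB : B -> B -> Prop).

Lemma iso_inv f g : isoF EA EB f g -> isoF EB EA g f.
Proof.
  intros (H1 & H2 & H3). split; [|split]; auto.
  intros b1 b2. rewrite H3, !H2. tauto.
Qed.

Lemma twin_push f g a b : isoF EA EB f g -> twin EA a b -> twin EB (f a) (f b).
Proof.
  intros (H1 & H2 & H3) (Hab & Eab & Hw). split; [|split].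
  - intro E. apply Hab. rewrite <- (H1 a), <- (H1 b), E. reflexivity.
  - apply H3; auto.
  - intros w Hwa Hwb. rewrite <- (H2 w), <- !H3. apply Hw.
    + intro E. apply Hwa. rewrite <- E, H2. reflexivity.
    + intro E. apply Hwb. rewrite <- E, H2. reflexivity.
Qed.
End Graphs.

Section Twin.
Context {A : Type} (E : A -> A -> Prop) (Esym : forall x y, E x y -> E y x).

Lemma twin_sym a b : twin E a b -> twin E b a.
Proof.
  intros (H1 & H2 & H3). split; [|split]; auto.
  intros w Hw1 Hw2. symmetry. auto.
Qed.

Lemma twin_trans a b c : twin E a b -> twin E b c -> a <> c -> twin E a c.
Proof.
  intros (Hab & Eab & Hw1) (Hbc & Ebc & Hw2) Hac. split; [|split]; auto.
  - apply (Hw2 a); auto.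
  - intros w Hwa Hwc. destruct (classic (w = b)) as [->|Hwb].
    + split; intros _; auto.
    + rewrite (Hw1 w Hwa Hwb). apply Hw2; auto.
Qed.

Definition swapf (p q : A) (y : A) : A :=
  if excluded_middle_informative (y = p) then q
  else if excluded_middle_informative (y = q) then p else y.

Lemma swapf_cases p q y :
  (y = p /\ swapf p q y = q) \/ (y = q /\ swapf p q y = p) \/
  (y <> p /\ y <> q /\ swapf p q y = y).
Proof.
  unfold swapf. destruct (excluded_middle_informative (y = p)); auto.
  destruct (excluded_middle_informative (y = q)); auto.
Qed.

Lemma swapf_invol p q y : p <> q -> swapf p q (swapf p q y) = y.
Proof.
  intro Hpq. destruct (swapf_cases p q y) as [[H1 H2]|[[H1 H2]|(H1 & H0 & H2)]];
  rewrite H2; destruct (swapf_cases p q (swapf p q y)) as [[K1 K2]|[[K1 K2]|(K1 & K0 & K2)]];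
  congruence.
Qed.

Lemma swapf_aut p q (Eirr : forall x, ~ E x x) x y :
  twin E p q -> (E (swapf p q x) (swapf p q y) <-> E x y).
Proof.
  intros (Hpq & Epq & Hw).
  destruct (swapf_cases p q x) as [[H1 H2]|[[H1 H2]|(H1 & H0 & H2)]]; rewrite H2;
  destruct (swapf_cases p q y) as [[K1 K2]|[[K1 K2]|(K1 & K0 & K2)]]; rewrite K2; subst;
  try (split; intro Z; exfalso; eapply Eirr; eassumption);
  try (split; intro; apply Esym; assumption);
  try tauto.
  - specialize (Hw y K1 K0). split; intro; apply Esym; apply Hw; apply Esym; assumption.
  - specialize (Hw y K1 K0). split; intro; apply Esym; apply Hw; apply Esym; assumption.
  - specialize (Hw x H1 H0). symmetry; assumption.
  - specialize (Hw x H1 H0). assumption.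
Qed.
End Twin.

Lemma normalize {A B : Type} (EA : A -> A -> Prop) (EB : B -> B -> Prop) f g a0 b0 :
  (forall x y, EB x y -> EB y x) -> (forall x, ~ EB x x) ->
  isoF EA EB f g -> (f a0 = b0 \/ twin EB (f a0) b0) ->
  exists f' g', isoF EA EB f' g' /\ f' a0 = b0.
Proof.
  intros Hsym Hirr Hiso [Hf|Htw].
  - exists f, g. auto.
  - destruct Hiso as (H1 & H2 & H3).
    assert (Hpq : f a0 <> b0) by (destruct Htw; auto).
    exists (fun x => swapf (f a0) b0 (f x)), (fun y => g (swapf (f a0) b0 y)).
    split; [split; [|split]|].
    + intro a. rewrite swapf_invol; auto.
    + intro b. rewrite H2, swapf_invol; auto.
    + intros a1 a2. rewrite (swapf_aut EB Hsym); auto.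
    + simpl. destruct (swapf_cases (f a0) b0 (f a0)) as [[_ K]|[[K _]|(K & _)]]; auto; congruence.
Qed.

Section LG.
Variable L : loop.
Hypothesis PA : power_associative L.
Local Notation one := (lone L).
Local Notation zp := (zpow L).
Local Notation pm := (pm_power_adj L).
Local Notation pa := (power_adj L).

Lemma pm_sym x y : pm x y -> pm y x.
Proof. intros (H & n & Hn & Hd). split; auto. exists n; split; auto; tauto. Qed.

Lemma pa_sym x y : pa x y -> pa y x.
Proof. intros (H & n & Hd). split; auto. exists n; tauto. Qed.

Lemma pm_irr x : ~ pm x x.
Proof. intros (H & _). auto. Qed.
Lemma pa_irr x : ~ pa x x.
Proof. intros (H & _). auto. Qed.

Lemma cmp_sym x y : cmp L x y -> cmp L y x.
Proof. intros (n & Hn & Hd). exists n; split; auto; tauto. Qed.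

Lemma tor_cmp x y : tor L x -> cmp L x y -> tor L y.
Proof.
  intros (n & Hn & Hx) (k & Hk & [Hy|Hy]).
  - exists n. split; auto. rewrite Hy, zpow_mul by auto. rewrite Z.mul_comm, <- zpow_mul by auto.
    rewrite Hx. apply zpow_one_base; auto.
  - exists (k * n). split; [lia|]. rewrite <- zpow_mul by auto. rewrite <- Hy. auto.
Qed.

Lemma cmp_one y : cmp L one y -> y = one \/ tor L y.
Proof.
  intros (n & Hn & [H|H]).
  - left. rewrite H. apply zpow_one_base; auto.
  - right. exists n. auto.
Qed.

Lemma tor_cmp_one y : tor L y -> cmp L one y.
Proof. intros (n & Hn & H). exists n. split; auto. Qed.

Lemma tor_one : tor L one.
Proof. exists 1. split; [lia|]. apply zpow_one_base; auto. Qed.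

Lemma zp_inj v a b : ~ tor L v -> zp v a = zp v b -> a = b.
Proof.
  intros Hv H. apply zpow_sub_one in H; auto.
  destruct (Z.eq_dec (a - b) 0). lia. exfalso. apply Hv. exists (a - b). auto.
Qed.

Lemma gen_twin x z a b : x <> z -> z = zp x a -> x = zp z b -> a <> 0 -> b <> 0 -> twin pm x z.
Proof.
  intros Hxz Hz Hx Ha Hb. split; [|split]; auto.
  - split; auto. exists a. auto.
  - intros w Hwx Hwz. split; intros (_ & n & Hn & [H|H]); split; auto.
    + exists (n * a). split; [lia|]. left. rewrite Hz, H, zpow_mul; auto.
    + exists (b * n). split; [lia|]. right. rewrite H, Hx, zpow_mul; auto.
    + exists (n * b). split; [lia|]. left. rewrite Hx, H, zpow_mul; auto.
    + exists (a * n). split; [lia|]. right. rewrite H, Hz, zpow_mul; auto.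
Qed.

Lemma inv_twin x : x <> zp x (-1) -> twin pm x (zp x (-1)).
Proof.
  intro H. apply (gen_twin _ _ (-1) (-1)); auto; try lia.
  rewrite zpow_inv_inv; auto.
Qed.

Lemma notor_inv_ne v : ~ tor L v -> v <> zp v (-1).
Proof.
  intros Hv E. rewrite <- (zpow_1 L v) in E at 1. apply zp_inj in E; auto. lia.
Qed.

Lemma int_lemma1 k n : k <> 0 -> k <> -2 -> k = (k + 1) * n -> False.
Proof.
  intros H1 H2 H3. assert (H4 : (k + 1) * (1 - n) = 1) by lia.
  apply Z.eq_mul_1 in H4. lia.
Qed.
Lemma int_lemma2 k n : k <> 1 -> k <> -1 -> k + 1 = k * n -> False.
Proof.
  intros H1 H2 H3. assert (H4 : k * (n - 1) = 1) by lia.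
  apply Z.eq_mul_1 in H4. lia.
Qed.

Lemma lemmaB_A v u k : ~ tor L v -> twin pm v u -> u = zp v k -> k <> 0 -> u = zp v (-1).
Proof.
  intros Hv (Hvu & Evu & Hw) Hu Hk.
  destruct (Z.eq_dec k (-1)) as [->|Hk1]; auto. exfalso.
  assert (Hk2 : k <> 1). { intros ->. apply Hvu. rewrite Hu, zpow_1; auto. }
  set (mm := if Z.eq_dec k (-2) then 3 else k + 1).
  assert (Hm0 : mm <> 0) by (unfold mm; destruct (Z.eq_dec k (-2)); lia).
  assert (Hm1 : mm <> 1) by (unfold mm; destruct (Z.eq_dec k (-2)); lia).
  assert (Hmk : mm <> k) by (unfold mm; destruct (Z.eq_dec k (-2)); lia).
  set (w := zp v mm).
  assert (Hwv : w <> v). { intro E. unfold w in E. rewrite <- (zpow_1 L v) in E at 2. apply zp_inj in E; auto. }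
  assert (Hwu : w <> u). { intro E. unfold w in E. rewrite Hu in E. apply zp_inj in E; auto. }
  assert (Pwv : pm w v). { split; auto. exists mm. split; auto. }
  apply (Hw w Hwv Hwu) in Pwv. destruct Pwv as (_ & n & Hn & [E|E]).
  - unfold w in E. rewrite Hu, zpow_mul in E; auto. apply zp_inj in E; auto.
    unfold mm in E. destruct (Z.eq_dec k (-2)). lia. apply (int_lemma1 k n); auto.
  - unfold w in E. rewrite Hu, zpow_mul in E; auto. apply zp_inj in E; auto.
    unfold mm in E. destruct (Z.eq_dec k (-2)). lia. apply (int_lemma2 k n); auto.
Qed.

Lemma lemmaB v u : ~ tor L v -> twin pm v u -> u = zp v (-1).
Proof.
  intros Hv Htw. pose proof Htw as Ht. destruct Ht as (Hvu & (_ & k & Hk & [E|E]) & Hw).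
  - apply (lemmaB_A v u k); auto.
  - assert (Hu : ~ tor L u). { intro T. apply Hv. apply (tor_cmp u v); auto. exists k. auto. }
    assert (E2 : v = zp u (-1)). { apply (lemmaB_A u v k); auto. apply twin_sym; auto. exact pm_sym. }
    rewrite E2, zpow_inv_inv; auto.
Qed.

Lemma pa_one y : pa one y <-> y <> one.
Proof.
  split. intros (H & _). auto. intro H. split; auto. exists 0. right. reflexivity.
Qed.

Lemma pa_pm x y : x <> one -> y <> one -> (pa x y <-> pm x y).
Proof.
  intros Hx Hy. split.
  - intros (H & n & Hn). split; auto. destruct (Z.eq_dec n 0) as [->|Hn0].
    + simpl in Hn. tauto.
    + exists n. auto.
  - intros (H & n & _ & Hn). split; auto. exists n. auto.
Qed.

Lemma pm_char x y : pm x y <-> pa x y /\ (x = one -> tor L y) /\ (y = one -> tor L x).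
Proof.
  split.
  - intros (H & n & Hn & Hd). split; [split; auto; exists n; auto|split].
    + intros ->. destruct (cmp_one y) as [->|T]; auto. exists n; auto. tauto.
    + intros ->. destruct (cmp_one x) as [->|T]; auto. exists n; split; auto; tauto. tauto.
  - intros (Hp & H1 & H2). destruct (classic (x = one)) as [->|Hx].
    + destruct Hp as (Hne & _). split; auto. apply tor_cmp_one; auto.
    + destruct (classic (y = one)) as [->|Hy].
      * destruct Hp as (Hne & _). split; auto. apply cmp_sym, tor_cmp_one; auto.
      * apply pa_pm; auto.
Qed.

Lemma pa_char x y : pa x y <-> x <> y /\ (pm x y \/ x = one \/ y = one).
Proof.
  split.
  - intro Hp. pose proof Hp as Hp'. destruct Hp' as (Hne & _). split; auto.
    destruct (classic (x = one)); auto. destruct (classic (y = one)); auto.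
    left. apply pa_pm; auto.
  - intros (Hne & [Hp|[ -> | -> ]]).
    + destruct Hp as (_ & n & _ & Hn). split; auto. exists n; auto.
    + apply pa_one; auto.
    + apply pa_sym, pa_one; auto.
Qed.

Lemma twinQP x z : twin pm x z -> x <> one -> z <> one -> twin pa x z.
Proof.
  intros (Hxz & Exz & Hw) Hx Hz. split; [|split]; auto.
  - apply pa_pm; auto.
  - intros w Hwx Hwz. destruct (classic (w = one)) as [->|Hw1].
    + rewrite !pa_one. tauto.
    + rewrite !pa_pm; auto.
Qed.

Lemma twinPQ v u : twin pa v u -> ~ tor L v -> v <> one -> u <> one -> twin pm v u.
Proof.
  intros (Hvu & Evu & Hw) Hv Hv1 Hu1.
  assert (Pvu : pm v u) by (apply pa_pm; auto).
  split; [|split]; auto.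
  intros w Hwv Hwu. destruct (classic (w = one)) as [->|Hw1].
  - split; intros (_ & C); apply cmp_one in C; destruct C as [C|C]; try congruence.
    all: exfalso; apply Hv; first [assumption | apply (tor_cmp u v); auto; destruct Pvu as (_ & C2); apply cmp_sym; exact C2].
  - rewrite <- !pa_pm; auto.
Qed.

Lemma twin_cases v k : zp v 2 = one -> zp v k = one \/ zp v k = v.
Proof.
  intro H. rewrite (zpow_mod L PA v 2 k H) by lia.
  assert (0 <= k mod 2 < 2) by (apply Z.mod_pos_bound; lia).
  destruct (Z.eq_dec (k mod 2) 0) as [->|]. auto.
  replace (k mod 2) with 1 by lia. right. apply zpow_1.
Qed.

Lemma three_cases v k : zp v 3 = one -> zp v k = one \/ zp v k = v \/ zp v k = zp v (-1).
Proof.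
  intro H. rewrite (zpow_mod L PA v 3 k H) by lia.
  assert (0 <= k mod 3 < 3) by (apply Z.mod_pos_bound; lia).
  destruct (Z.eq_dec (k mod 3) 0) as [->|]. auto.
  destruct (Z.eq_dec (k mod 3) 1) as [->|]. right; left. apply zpow_1.
  replace (k mod 3) with 2 by lia. right; right.
  replace 2 with (3 + -1) by lia. rewrite zpow_add, H, lmul1x; auto.
Qed.

Lemma four_cases v k : zp v 4 = one ->
  zp v k = one \/ zp v k = v \/ zp v k = zp v 2 \/ zp v k = zp v (-1).
Proof.
  intro H. rewrite (zpow_mod L PA v 4 k H) by lia.
  assert (0 <= k mod 4 < 4) by (apply Z.mod_pos_bound; lia).
  destruct (Z.eq_dec (k mod 4) 0) as [->|]. auto.
  destruct (Z.eq_dec (k mod 4) 1) as [->|]. right; left. apply zpow_1.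
  destruct (Z.eq_dec (k mod 4) 2) as [->|]. auto.
  replace (k mod 4) with 3 by lia. right; right; right.
  replace 3 with (4 + -1) by lia. rewrite zpow_add, H, lmul1x; auto.
Qed.

Lemma sq_one_inv w : zp w 2 = one -> zp w (-1) = w.
Proof.
  intro H. rewrite <- (zpow_1 L w) at 2. replace 1 with (2 + -1) by lia.
  rewrite zpow_add, H, lmul1x; auto.
Qed.

Lemma inv_sq_one w : zp w (-1) = w -> zp w 2 = one.
Proof.
  intro H. replace 2 with (1 - (-1)) by lia. apply zpow_sub_one; auto.
  rewrite H, zpow_1. reflexivity.
Qed.

Lemma c3 w u : zp w 3 = one -> zp u 3 = one -> cmp L w u -> u <> one -> u <> w -> w <> one ->
  u = zp w (-1).
Proof.
  intros Hw Hu (k & Hk & [E|E]) Hu1 Huw Hw1.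
  - destruct (three_cases w k Hw) as [C|[C|C]]; congruence.
  - destruct (three_cases u k Hu) as [C|[C|C]]; try congruence.
    rewrite E, C, zpow_inv_inv; auto.
Qed.

Lemma tor_pos w : tor L w -> exists N : nat, (1 <= N)%nat /\ zp w (Z.of_nat N) = one.
Proof.
  intros (n & Hn & H). destruct (Z_lt_le_dec 0 n).
  - exists (Z.to_nat n). split. lia. rewrite Z2Nat.id by lia. auto.
  - exists (Z.to_nat (- n)). split. lia. rewrite Z2Nat.id by lia.
    replace (- n) with (n * -1) by lia. rewrite <- zpow_mul, H, zpow_one_base; auto.
Qed.

End LG.

Lemma q4 (L : loop) (PA : power_associative L) a b e :
  zpow L a 2 = e -> zpow L b 2 = e -> zpow L e 2 = lone L -> cmp L a b ->
  a <> lone L -> b <> lone L -> a <> e -> b <> e -> a <> b -> b = zpow L a (-1).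
Proof.
  intros Ha Hb He (k & Hk & [E|E]) Ha1 Hb1 Hae Hbe Hab.
  - assert (A4 : zpow L a 4 = lone L).
    { replace 4 with (2 * 2) by lia. rewrite <- zpow_mul, Ha; auto. }
    destruct (four_cases L PA a k A4) as [C|[C|[C|C]]]; congruence.
  - assert (B4 : zpow L b 4 = lone L).
    { replace 4 with (2 * 2) by lia. rewrite <- zpow_mul, Hb; auto. }
    destruct (four_cases L PA b k B4) as [C|[C|[C|C]]]; try congruence.
    rewrite E, C, zpow_inv_inv; auto.
Qed.

Lemma keyQ (G H : loop) (PG : power_associative G) (PH : power_associative H) f g :
  isoF (pm_power_adj G) (pm_power_adj H) f g -> ~ tor H (f (lone G)) -> False.
Proof.
  intros Hiso Hc.
  pose proof Hiso as (I1 & I2 & I3).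
  set (c := f (lone G)) in *.
  set (ci := zpow H c (-1)).
  assert (Hgc : g c = lone G) by (apply I1).
  assert (tw1 : twin (pm_power_adj H) c ci) by (apply inv_twin; auto; apply notor_inv_ne; auto).
  set (e := g ci).
  assert (twG : twin (pm_power_adj G) (lone G) e).
  { rewrite <- Hgc. apply (twin_push (pm_power_adj H) (pm_power_adj G) g f); auto. apply iso_inv; auto. }
  assert (e1 : e <> lone G) by (intro Z; destruct twG as (Z2 & _); auto).
  assert (te : tor G e).
  { destruct twG as (_ & (_ & C) & _). destruct (cmp_one G PG e C); [congruence|auto]. }
  assert (uniq : forall u, twin (pm_power_adj H) c u -> u = ci) by (intros; apply lemmaB; auto).
  assert (nt : forall x, pm_power_adj G (lone G) x -> ~ tor H (f x)).
  { intros x Hx T. apply I3 in Hx. apply Hc. apply (tor_cmp H PH (f x)); auto.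
    destruct Hx as (_ & C). apply cmp_sym; auto. }
  assert (e2 : zpow G e 2 = lone G).
  { destruct (classic (zpow G e (-1) = e)) as [E|E].
    - apply inv_sq_one; auto.
    - exfalso. set (e' := zpow G e (-1)) in *.
      assert (tw2 : twin (pm_power_adj G) e e') by (apply inv_twin; auto; intro Z; apply E; auto).
      assert (e'1 : e' <> lone G).
      { intro Z. apply e1. rewrite <- (zpow_inv_inv G PG e). fold e'. rewrite Z. apply zpow_one_base; auto. }
      assert (tw3 : twin (pm_power_adj G) (lone G) e') by (apply (twin_trans _ (pm_sym G) _ e); auto).
      apply (twin_push (pm_power_adj G) (pm_power_adj H) f g) in tw3; auto. apply uniq in tw3.
      apply E. rewrite <- (I1 e'), tw3. reflexivity. }
  assert (sq : forall x, tor G x -> x <> lone G -> x <> e -> zpow G x 2 = e).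
  { intros x Tx Hx1 Hxe.
    assert (P1x : pm_power_adj G (lone G) x) by (split; [congruence|apply tor_cmp_one; auto]).
    assert (Ce : forall y, pm_power_adj G y (lone G) -> y <> e -> exists k, k <> 0 /\ e = zpow G y k).
    { intros y Hy Hye. pose proof Hy as (Hy1 & _).
      assert (Pye : pm_power_adj G y e).
      { destruct twG as (_ & _ & Hw). apply (Hw y); auto. }
      destruct Pye as (_ & k & Hk & [E|E]).
      - exists k; auto.
      - exfalso. destruct (twin_cases G PG e k e2) as [C|C]; congruence. }
    destruct (Ce x (pm_sym _ _ _ P1x) Hxe) as (k & Hk & Ek).
    destruct (classic (zpow G x 2 = e)) as [Ye|Ye]; auto. exfalso.
    destruct (classic (zpow G x 2 = lone G)) as [Y1|Y1].
    { destruct (twin_cases G PG x k Y1) as [C|C]; congruence. }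
    assert (Ty : tor G (zpow G x 2)).
    { apply (tor_cmp G PG x); auto. exists 2; split; [lia|left; reflexivity]. }
    assert (P1y : pm_power_adj G (zpow G x 2) (lone G)).
    { apply pm_sym. split; [congruence|apply tor_cmp_one; auto]. }
    destruct (Ce _ P1y Ye) as (j & Hj & Ej).
    rewrite (zpow_mul G PG x 2 j) in Ej.
    set (z := zpow G x (1 + 2*j)).
    assert (Hzx : x <> z).
    { intro Z. apply e1. assert (E : zpow G x (1 + 2*j) = zpow G x 1) by (rewrite zpow_1; auto).
      apply zpow_sub_one in E; auto. replace (1 + 2*j - 1) with (2*j) in E by lia. congruence. }
    assert (Hxz2 : x = zpow G z (1 + 2*j)).
    { unfold z. rewrite zpow_mul by auto.
      replace ((1 + 2*j) * (1 + 2*j)) with (1 + (2*j*2 + 2*j*(2*j))) by ring.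
      rewrite !zpow_add by auto.
      rewrite <- (zpow_mul G PG x (2*j) 2), <- (zpow_mul G PG x (2*j) (2*j)), <- Ej, e2.
      rewrite <- (zpow_mul G PG e 2 j), e2, zpow_one_base, !lmulx1, zpow_1; auto. }
    assert (Twz : twin (pm_power_adj G) x z) by (apply (gen_twin G PG x z (1+2*j) (1+2*j)); auto; lia).
    assert (Hxi : x <> zpow G x (-1)).
    { intro Z. apply Y1. apply (inv_sq_one G PG). congruence. }
    assert (Twi : twin (pm_power_adj G) x (zpow G x (-1))) by (apply inv_twin; auto).
    pose proof (nt x P1x) as Nx.
    apply (twin_push (pm_power_adj G) (pm_power_adj H) f g) in Twz; auto. apply (twin_push (pm_power_adj G) (pm_power_adj H) f g) in Twi; auto.
    apply lemmaB in Twz; auto. apply lemmaB in Twi; auto.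
    assert (Ez : z = zpow G x (-1)).
    { rewrite <- (I1 z), Twz, <- Twi, I1. reflexivity. }
    unfold z in Ez. apply zpow_sub_one in Ez; auto.
    replace (1 + 2*j - -1) with (2 + 2*j) by lia.
    replace (1 + 2*j - -1) with (2 + 2*j) in Ez by lia. rewrite zpow_add, <- Ej in Ez by auto.
    apply Ye. apply (rcancel G _ _ e). rewrite Ez. rewrite <- e2. simpl. rewrite lmul1x. reflexivity. }
  assert (neq : forall a b, a <> b -> zpow H c a <> zpow H c b).
  { intros a b Hab E. apply Hab. apply (zp_inj H PH c); auto. }
  assert (pull : forall u v, pm_power_adj H u v -> pm_power_adj G (g u) (g v)).
  { intros u v P. apply I3. rewrite !I2. auto. }
  assert (adj : forall a k, k <> 0 -> a <> zpow H a k -> pm_power_adj H a (zpow H a k)).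
  { intros a k Hk Hne. split; auto. exists k. split; auto. }
  assert (P12 : pm_power_adj H c (zpow H c 2)).
  { apply adj. lia. pose proof (neq 1 2) as N. rewrite zpow_1 in N. apply N; lia. }
  assert (P24 : pm_power_adj H (zpow H c 2) (zpow H c 4)).
  { replace 4 with (2*2) by lia. rewrite <- zpow_mul by auto. apply adj. lia.
    rewrite zpow_mul by auto. apply neq; lia. }
  assert (P28 : pm_power_adj H (zpow H c 2) (zpow H c 8)).
  { replace 8 with (2*4) by lia. rewrite <- zpow_mul by auto. apply adj. lia.
    rewrite zpow_mul by auto. apply neq; lia. }
  assert (mem : forall k, k <> 0 -> k <> -1 -> pm_power_adj H c (zpow H c k) ->
                 zpow G (g (zpow H c k)) 2 = e /\ g (zpow H c k) <> lone G /\ g (zpow H c k) <> e).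
  { intros k Hk Hk1 P. apply pull in P. rewrite Hgc in P.
    pose proof P as (Hne & C). destruct (cmp_one G PG _ C) as [C1|C1]; [congruence|].
    assert (He : g (zpow H c k) <> e).
    { intro Z. apply (f_equal f) in Z. unfold e in Z. rewrite !I2 in Z. apply (neq k (-1) Hk1); exact Z. }
    split; [apply sq; auto|split; auto]. }
  assert (P14 : pm_power_adj H c (zpow H c 4)).
  { apply adj. lia. pose proof (neq 1 4) as N. rewrite zpow_1 in N. apply N; lia. }
  assert (P18 : pm_power_adj H c (zpow H c 8)).
  { apply adj. lia. pose proof (neq 1 8) as N. rewrite zpow_1 in N. apply N; lia. }
  destruct (mem 2 ltac:(lia) ltac:(lia) P12) as (A2 & A1 & Ae).
  destruct (mem 4 ltac:(lia) ltac:(lia) P14) as (B2 & B1 & Be).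
  destruct (mem 8 ltac:(lia) ltac:(lia) P18) as (D2 & D1 & De).
  pose proof (pull _ _ P24) as Q1. pose proof (pull _ _ P28) as Q2.
  assert (X1 := q4 G PG _ _ e A2 B2 e2 (proj2 Q1) A1 B1 Ae Be (proj1 Q1)).
  assert (X2 := q4 G PG _ _ e A2 D2 e2 (proj2 Q2) A1 D1 Ae De (proj1 Q2)).
  rewrite <- X2 in X1. apply (f_equal f) in X1. rewrite !I2 in X1.
  apply (neq 4 8); auto. lia.
Qed.

Lemma keyP (G H : loop) (PG : power_associative G) (PH : power_associative H) f g :
  isoF (power_adj G) (power_adj H) f g -> f (lone G) = lone H ->
  forall x, tor G x -> tor H (f x).
Proof.
  intros Hiso Hf1 x Tx.
  pose proof Hiso as (I1 & I2 & I3).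
  assert (Hg1 : g (lone H) = lone G) by (rewrite <- Hf1; apply I1).
  assert (fne : forall w, w <> lone G -> f w <> lone H).
  { intros w Hw E. apply Hw. rewrite <- (I1 w), E. auto. }
  assert (gne : forall w, w <> lone H -> g w <> lone G).
  { intros w Hw E. apply Hw. rewrite <- (I2 w), E. auto. }
  destruct (classic (x = lone G)) as [->|Hx1]. { rewrite Hf1. apply tor_one; auto. }
  apply NNPP. intro Nfx.
  set (B := fun w => w <> lone G /\ tor G w /\ ~ tor H (f w)).
  assert (P3 : forall w u, B w -> power_adj G w u -> u <> lone G -> B u).
  { intros w u (Hw1 & Tw & Nw) Hwu Hu1. split; [|split]; auto.
    - apply (tor_cmp G PG w); auto. apply pa_pm in Hwu; auto. destruct Hwu; auto.
    - intro T. apply Nw. apply I3 in Hwu. apply pa_pm in Hwu; auto.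
      apply (tor_cmp H PH (f u)); auto. destruct Hwu as (_ & C). apply cmp_sym; auto. }
  assert (P1H : forall v u, ~ tor H v -> v <> lone H -> u <> lone H ->
             twin (power_adj H) v u -> u = zpow H v (-1)).
  { intros. apply lemmaB; auto. apply twinPQ; auto. }
  assert (P4 : forall w z, B w -> twin (power_adj G) w z -> z <> lone G -> f z = zpow H (f w) (-1)).
  { intros w z (Hw1 & Tw & Nw) Tz Hz1. apply P1H; auto.
    apply (twin_push (power_adj G) (power_adj H) f g); auto. }
  assert (inv1 : forall (L : loop) (PL : power_associative L) w,
             w <> lone L -> zpow L w (-1) <> lone L).
  { intros L PL w Hw Z. apply Hw. rewrite <- (zpow_inv_inv L PL w), Z. apply zpow_one_base; auto. }
  assert (P5 : forall w, B w -> zpow G w (-1) <> w).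
  { intros w Bw Ew. pose proof Bw as (Hw1 & Tw & Nw).
    set (y := f w). set (yi := zpow H y (-1)).
    assert (Hy1 : y <> lone H) by (apply fne; auto).
    assert (Hyi : y <> yi) by (apply notor_inv_ne; auto).
    assert (Hyi1 : yi <> lone H) by (apply inv1; auto).
    assert (Tw1 : twin (power_adj H) y yi) by (apply twinQP; auto; apply inv_twin; auto).
    set (z := g yi).
    assert (Tw2 : twin (power_adj G) w z).
    { replace w with (g y) by (apply I1).
      apply (twin_push (power_adj H) (power_adj G) g f); auto. apply iso_inv; auto. }
    assert (Hz1 : z <> lone G) by (apply gne; auto).
    assert (Hwz : w <> z) by (destruct Tw2; auto).
    assert (Pwz : power_adj G w z) by (destruct Tw2 as (_ & P & _); auto).
    assert (Cwz : cmp G w z). { apply pa_pm in Pwz; auto. destruct Pwz; auto. }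
    assert (w2 : zpow G w 2 = lone G) by (apply inv_sq_one; auto).
    destruct Cwz as (k & Hk & [E|E]).
    - destruct (twin_cases G PG w k w2); congruence.
    - assert (Bz : B z) by (apply (P3 w); auto).
      destruct (classic (zpow G z (-1) = z)) as [Ez|Ez].
      + assert (z2 : zpow G z 2 = lone G) by (apply inv_sq_one; auto).
        destruct (twin_cases G PG z k z2); congruence.
      + assert (Ez' : z <> zpow G z (-1)) by congruence.
        assert (Hzi1 : zpow G z (-1) <> lone G) by (apply inv1; auto).
        assert (Tz : twin (power_adj G) z (zpow G z (-1))) by (apply twinQP; auto; apply inv_twin; auto).
        assert (Hwzi : w <> zpow G z (-1)).
        { intro Z. apply Hwz. rewrite <- (zpow_inv_inv G PG z), <- Z. auto. }
        assert (Tw3 : twin (power_adj G) w (zpow G z (-1))) by (apply (twin_trans _ (pa_sym G) _ z); auto).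
        assert (F : f (zpow G z (-1)) = f z) by (rewrite (P4 w _ Bw Tw3), (P4 w _ Bw Tw2); auto).
        apply (f_equal g) in F. rewrite !I1 in F. auto. }
  assert (P6 : forall w z, B w -> twin (power_adj G) w z -> z <> lone G -> z = zpow G w (-1)).
  { intros w z Bw Tz Hz1. pose proof Bw as (Hw1 & Tw & Nw).
    assert (Hwi : w <> zpow G w (-1)) by (intro Z; apply (P5 w Bw); auto).
    assert (Hwi1 : zpow G w (-1) <> lone G) by (apply inv1; auto).
    assert (Ti : twin (power_adj G) w (zpow G w (-1))) by (apply twinQP; auto; apply inv_twin; auto).
    assert (E : f z = f (zpow G w (-1))) by (rewrite (P4 w z), (P4 w (zpow G w (-1))); auto).
    apply (f_equal g) in E. rewrite !I1 in E. exact E. }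
  assert (P7 : forall N w, B w -> (1 <= N)%nat -> zpow G w (Z.of_nat N) = lone G -> zpow G w 3 = lone G).
  { intro N. induction N as [N IH] using lt_wf_ind. intros w Bw HN EN.
    pose proof Bw as (Hw1 & Tw & Nw).
    assert (w2 : zpow G w 2 <> lone G) by (intro Z; apply (P5 w Bw); apply sq_one_inv; auto).
    destruct (Nat.Even_or_Odd N) as [[M HM]|[M HM]].
    - set (v := zpow G w (Z.of_nat M)).
      assert (v2 : zpow G v 2 = lone G).
      { unfold v. rewrite zpow_mul by auto. rewrite <- EN. f_equal. lia. }
      destruct (classic (v = lone G)) as [V1|V1].
      + apply (IH M); auto; lia.
      + exfalso. destruct (classic (v = w)) as [Vw|Vw].
        * apply w2. rewrite <- Vw. exact v2.
        * assert (Bv : B v). { apply (P3 w); auto. split; auto. exists (Z.of_nat M). left. reflexivity. }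
          apply (P5 v Bv). apply sq_one_inv; auto.
    - set (z := zpow G w 2).
      assert (Hzw : w <> z).
      { intro Z. apply Hw1. assert (E : zpow G w 2 = zpow G w 1) by (rewrite zpow_1; auto).
        apply zpow_sub_one in E; auto. replace (2 - 1) with 1 in E by lia. rewrite zpow_1 in E. auto. }
      assert (Hwz : w = zpow G z (Z.of_nat M + 1)).
      { unfold z. rewrite zpow_mul by auto. replace (2 * (Z.of_nat M + 1)) with (Z.of_nat N + 1) by lia.
        rewrite zpow_add, EN, zpow_1, lmul1x by auto. reflexivity. }
      assert (Tz : twin (power_adj G) w z).
      { apply twinQP; auto. apply (gen_twin G PG w z 2 (Z.of_nat M + 1)); auto; lia. }
      pose proof (P6 w z Bw Tz w2) as Ez. unfold z in Ez. apply (zpow_sub_one G PG) in Ez.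
      replace (2 - -1) with 3 in Ez by lia. exact Ez. }
  assert (Bx : B x) by (split; auto).
  assert (x3 : zpow G x 3 = lone G).
  { destruct (tor_pos G PG x Tx) as (N & HN & EN). apply (P7 N); auto. }
  set (y := f x).
  assert (Hy1 : y <> lone H) by (apply fne; auto).
  assert (neq : forall a b, a <> b -> zpow H y a <> zpow H y b).
  { intros a b Hab E. apply Hab. apply (zp_inj H PH y); auto. }
  assert (adj : forall u k, u <> zpow H u k -> power_adj H u (zpow H u k)).
  { intros u k Hne. split; auto. exists k. left; reflexivity. }
  assert (pull : forall u v, power_adj H u v -> power_adj G (g u) (g v)).
  { intros u v P. apply I3. rewrite !I2. auto. }
  assert (Hgy : g y = x) by (apply I1).
  assert (P12 : power_adj H y (zpow H y 2)).
  { apply adj. pose proof (neq 1 2) as N. rewrite zpow_1 in N. apply N; lia. }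
  assert (P14 : power_adj H y (zpow H y 4)).
  { apply adj. pose proof (neq 1 4) as N. rewrite zpow_1 in N. apply N; lia. }
  assert (P24 : power_adj H (zpow H y 2) (zpow H y 4)).
  { replace 4 with (2*2) by lia. rewrite <- zpow_mul by auto. apply adj.
    rewrite zpow_mul by auto. apply neq; lia. }
  assert (mem : forall k, k <> 0 -> power_adj H y (zpow H y k) ->
            power_adj G x (g (zpow H y k)) /\ B (g (zpow H y k))).
  { intros k Hk P. apply pull in P. rewrite Hgy in P. split; auto.
    apply (P3 x); auto. apply gne. pose proof (neq k 0 Hk) as N. simpl in N. exact N. }
  destruct (mem 2 ltac:(lia) P12) as (A1 & BA).
  destruct (mem 4 ltac:(lia) P14) as (C1 & BC).
  assert (cmpx : forall u, power_adj G x u -> B u -> cmp G x u).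
  { intros u P (Hu1 & _). apply pa_pm in P; auto. destruct P; auto. }
  assert (third : forall u, power_adj G x u -> B u -> u = zpow G x (-1)).
  { intros u P Bu. pose proof Bu as (Hu1 & Tu & Nu).
    destruct (tor_pos G PG u Tu) as (N & HN & EN).
    apply (c3 G PG); auto. apply (P7 N); auto. destruct P; auto. }
  pose proof (third _ A1 BA) as X1. pose proof (third _ C1 BC) as X2.
  rewrite <- X2 in X1. apply (f_equal f) in X1. rewrite !I2 in X1.
  apply (neq 2 4); auto. lia.
Qed.

Theorem mainTheorem2 (G H : loop) :
  power_associative G -> power_associative H ->
  (graph_iso (power_adj G) (power_adj H) <->
   graph_iso (pm_power_adj G) (pm_power_adj H)).
Proof.
  intros PG PH. split.
  - intros (f0 & g0 & Hiso0).
    assert (Hn : exists f g, isoF (power_adj G) (power_adj H) f g /\ f (lone G) = lone H).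
    { apply (normalize _ _ f0 g0); [apply pa_sym | apply pa_irr | exact Hiso0 |].
      destruct (classic (f0 (lone G) = lone H)) as [E|E]; [left; auto|right].
      destruct Hiso0 as (I1 & I2 & I3).
      split; [|split]; auto.
      - apply pa_sym, pa_one. auto.
      - intros w Hw1 Hw2. split; intros _.
        + apply pa_sym, pa_one; auto.
        + rewrite <- (I2 w). apply I3. apply pa_sym, pa_one. intro Z. apply Hw1.
          rewrite <- (I2 w), Z. reflexivity. }
    destruct Hn as (f & g & Hiso & Hf1).
    pose proof Hiso as (I1 & I2 & I3).
    assert (Hg1 : g (lone H) = lone G) by (rewrite <- Hf1; apply I1).
    assert (T1 : forall x, tor G x -> tor H (f x)) by (apply (keyP G H PG PH f g); auto).
    assert (T2 : forall y, tor H y -> tor G (g y)) by (apply (keyP H G PH PG g f); auto; apply iso_inv; auto).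
    assert (Tx : forall x, tor G x <-> tor H (f x)).
    { intro x; split; auto. intro T. rewrite <- (I1 x); auto. }
    assert (Ex : forall x, x = lone G <-> f x = lone H).
    { intro x; split; [intros ->; auto | intro E; rewrite <- (I1 x), E; auto]. }
    exists f, g. split; [|split]; auto.
    intros a1 a2. rewrite (pm_char G PG), (pm_char H PH), I3, (Ex a1), (Ex a2), (Tx a1), (Tx a2). tauto.
  - intros (f0 & g0 & Hiso0).
    destruct (classic (tor H (f0 (lone G)))) as [Tc|Tc].
    2: { exfalso. apply (keyQ G H PG PH f0 g0); auto. }
    assert (Hn : exists f g, isoF (pm_power_adj G) (pm_power_adj H) f g /\ f (lone G) = lone H).
    { apply (normalize _ _ f0 g0); [apply pm_sym | apply pm_irr | exact Hiso0 |].
      destruct (classic (f0 (lone G) = lone H)) as [E|E]; [left; auto|right].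
      destruct Hiso0 as (I1 & I2 & I3). set (c := f0 (lone G)) in *.
      assert (Pc1 : pm_power_adj H c (lone H)).
      { split; auto. apply cmp_sym, tor_cmp_one; auto. }
      split; [|split]; auto.
      intros w Hwc Hw1.
      assert (Hw : pm_power_adj H w (lone H) <-> tor H w).
      { split.
        - intros (_ & C). apply cmp_sym, (cmp_one H PH) in C. destruct C; congruence.
        - intro T. split; auto. apply cmp_sym, tor_cmp_one; auto. }
      rewrite Hw. split.
      + intros (_ & C). apply (tor_cmp H PH c); auto. apply cmp_sym; auto.
      + intro Tw. set (h := g0 (lone H)).
        assert (Ph : pm_power_adj G h (lone G)).
        { apply I3. unfold h. rewrite I2. fold c. apply pm_sym. auto. }
        assert (Th : tor G h).
        { destruct Ph as (Hh1 & C). apply cmp_sym, (cmp_one G PG) in C. destruct C; congruence. }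
        assert (Pw : pm_power_adj G (g0 w) h).
        { apply I3. unfold h. rewrite !I2. split; auto. apply cmp_sym, tor_cmp_one; auto. }
        assert (Tgw : tor G (g0 w)).
        { destruct Pw as (_ & C). apply (tor_cmp G PG h); auto. apply cmp_sym; auto. }
        assert (Hgw : g0 w <> lone G).
        { intro Z. apply Hwc. rewrite <- (I2 w), Z. reflexivity. }
        rewrite <- (I2 w). apply I3. split; auto. apply cmp_sym, tor_cmp_one; auto. }
    destruct Hn as (f & g & Hiso & Hf1).
    pose proof Hiso as (I1 & I2 & I3).
    assert (Hg1 : g (lone H) = lone G) by (rewrite <- Hf1; apply I1).
    assert (Ex : forall x, x = lone G <-> f x = lone H).
    { intro x; split; [intros ->; auto | intro E; rewrite <- (I1 x), E; auto]. }
    exists f, g. split; [|split]; auto.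
    intros a1 a2.
    assert (Inj : a1 = a2 <-> f a1 = f a2).
    { split; [intros ->; auto | intro E; rewrite <- (I1 a1), E, I1; auto]. }
    rewrite (pa_char G), (pa_char H), I3, (Ex a1), (Ex a2). tauto.
Qed.
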